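(* Let $C\subseteq\mathbb{F}_q^n$ be a linear code and $(A,B)$ a $2$-power $t$-error locating pair for $C$. Let $\mathbf{y}=\mathbf{c}+\mathbf{e}$ with $\mathbf{c}\in C$, $\mathrm{w}(\mathbf{e})=t$, $I_{\mathbf{e}}=\mathrm{supp}(\mathbf{e})$, and $\mathbf{e}^{(1)}=\mathbf{e}$, $\mathbf{e}^{(2)}=\mathbf{y}^2-\mathbf{c}^2$. Let $M=M_1\cap M_2$ with $M_1=\{\mathbf{a}\in A\mid \langle \mathbf{a}*\mathbf{y},\mathbf{b}\rangle=0\ \forall \mathbf{b}\in B\}$, $M_2=\{\mathbf{a}\in A\mid \langle \mathbf{a}*\mathbf{y}^2,\mathbf{v}\rangle=0\ \forall \mathbf{v}\in (B^{\perp}*C)^{\perp}\}$. Then $$M_{I_{\mathbf{e}}}=\big((\mathbf{e}^{(1)}*B)_{I_{\mathbf{e}}}\big)^{\perp}\cap \big((\mathbf{e}^{(2)}*(B^\perp*C)^\perp)_{I_{\mathbf{e}}}\big)^{\perp},$$ duals taken in $\mathbb{F}_q^{|I_{\mathbf{e}}|}$.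
   Context: All codes are $\mathbb{F}_q$-linear subspaces of $\mathbb{F}_q^n$. $\mathbf{u}*\mathbf{v}=(u_1v_1,\dots,u_nv_n)$, $\mathbf{u}^i=(u_1^i,\dots,u_n^i)$; $A*B$ is the span of all $\mathbf{a}*\mathbf{b}$; $\mathbf{u}*X=\{\mathbf{u}*\mathbf{x}:\mathbf{x}\in X\}$; $\langle\mathbf{u},\mathbf{v}\rangle=\sum_iu_iv_i$, $X^\perp$ the dual. $\mathrm{w}$ Hamming weight, $\mathrm{d}$ minimum distance, $\mathrm{supp}(\mathbf{x})=\{i:x_i\ne0\}$. For $J=\{j_1<\dots<j_s\}$, $X_J=\{(x_{j_1},\dots,x_{j_s}):\mathbf{x}\in X\}$. A pair $(A,B)$ is a $2$-power $t$-error locating pair for $C$ if: (1) $A*B\subseteq C^\perp$; (2) $\dim A>t$; (3) $\mathrm{d}(A^\perp)>t$; (4) $\mathrm{d}(A)+\mathrm{d}(C)>n$; (5) $\dim B+\dim (B^\perp*C)^\perp\ge t$. *)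

(* Defs.v *)
From HB Require Import structures.
From mathcomp Require Import all_boot all_order all_algebra all_field.
Set Implicit Arguments. Unset Strict Implicit. Unset Printing Implicit Defensive.
Import GRing.Theory.
Local Open Scope ring_scope.

Section Codes.
Variable F : finFieldType.

Definition sprod n (u v : 'rV[F]_n) : 'rV[F]_n := \row_i (u 0 i * v 0 i).
Definition spow n (u : 'rV[F]_n) (k : nat) : 'rV[F]_n := \row_i (u 0 i ^+ k).
Definition dotv n (u v : 'rV[F]_n) : F := \sum_i u 0 i * v 0 i.
Definition supp n (u : 'rV[F]_n) : {set 'I_n} := [set i | u 0 i != 0].
Definition wt n (u : 'rV[F]_n) : nat := #|supp u|.
(* minimum distance; the zero code gets the value n+1 (acting as +infinity) *)
Definition mindist n (X : {vspace 'rV[F]_n}) : nat :=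
  \big[minn/n.+1]_(x : 'rV[F]_n | (x \in X) && (x != 0)) wt x.

Definition span_pred m (P : pred 'rV[F]_m) : {vspace 'rV[F]_m} :=
  <<[seq x | x <- enum 'rV[F]_m & P x]>>%VS.
Definition span_img n m (f : 'rV[F]_n -> 'rV[F]_m) (X : {vspace 'rV[F]_n})
  : {vspace 'rV[F]_m} :=
  <<[seq f x | x <- enum 'rV[F]_n & x \in X]>>%VS.

Definition dual n (X : {vspace 'rV[F]_n}) : {vspace 'rV[F]_n} :=
  span_pred (fun x => [forall y : 'rV[F]_n, (y \in X) ==> (dotv x y == 0)]).
Definition star n (X Y : {vspace 'rV[F]_n}) : {vspace 'rV[F]_n} :=
  <<[seq sprod x y | x <- [seq x | x <- enum 'rV[F]_n & x \in X],
                     y <- [seq y | y <- enum 'rV[F]_n & y \in Y]]>>%VS.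
Definition smul n (u : 'rV[F]_n) (X : {vspace 'rV[F]_n}) : {vspace 'rV[F]_n} :=
  span_img (sprod u) X.

(* puncturing / restriction to J = {j_1 < ... < j_s}: (x_{j_1},...,x_{j_s}) *)
Definition restr n (J : {set 'I_n}) (x : 'rV[F]_n) : 'rV[F]_#|J| :=
  \row_(k < #|J|) x 0 (enum_val k).
Definition restrC n (J : {set 'I_n}) (X : {vspace 'rV[F]_n})
  : {vspace 'rV[F]_#|J|} := span_img (restr J) X.

Definition locating_pair2 n (t : nat) (C A B : {vspace 'rV[F]_n}) : Prop :=
  [/\ (star A B <= dual C)%VS,
      (t < \dim A)%N,
      (t < mindist (dual A))%N,
      (n < mindist A + mindist C)%N
    & (t <= \dim B + \dim (dual (star (dual B) C)))%N].

End Codes.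

(* Main.v *)
Require Import Defs.
From mathcomp Require Import all_boot all_order all_algebra all_field.
From mathcomp Require Import ring.
Set Implicit Arguments. Unset Strict Implicit. Unset Printing Implicit Defensive.
Import GRing.Theory.
Local Open Scope ring_scope.

Section Aux.
Variable F : finFieldType.

Lemma span_ind (vT : vectType F) (s : seq vT) (Q : vT -> Prop) :
  Q 0 -> (forall k x y, Q x -> Q y -> Q (k *: x + y)) ->
  (forall x, x \in s -> Q x) -> forall x, x \in <<s>>%VS -> Q x.
Proof.
move=> Q0 QL; elim: s => [|v s IH] Hs x.
  by rewrite span_nil memv0 => /eqP ->.
rewrite span_cons => /memv_addP [u /vlineP [k ->] [w Hw ->]].
apply: QL; last by apply: IH => // z zs; apply: Hs; rewrite inE zs orbT.
by apply: Hs; rewrite inE eqxx.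
Qed.

Lemma span_pred_mem m (P : pred 'rV[F]_m) x : P x -> x \in span_pred P.
Proof.
move=> Px; apply: memv_span; rewrite map_id mem_filter Px mem_enum //.
Qed.

Lemma span_pred_ind m (P : pred 'rV[F]_m) (Q : 'rV[F]_m -> Prop) :
  Q 0 -> (forall k x y, Q x -> Q y -> Q (k *: x + y)) ->
  (forall x, P x -> Q x) -> forall x, x \in span_pred P -> Q x.
Proof.
move=> Q0 QL HP; apply: span_ind => // x; rewrite map_id mem_filter.
by case/andP=> /HP.
Qed.

Lemma span_img_mem n m (f : 'rV[F]_n -> 'rV[F]_m) (X : {vspace 'rV[F]_n}) x :
  x \in X -> f x \in span_img f X.
Proof.
move=> Xx; apply: memv_span; apply: map_f; rewrite mem_filter Xx /=; exact: mem_enum.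
Qed.

Lemma span_img_ex n m (f : 'rV[F]_n -> 'rV[F]_m) (X : {vspace 'rV[F]_n}) z :
  f 0 = 0 -> (forall k x y, f (k *: x + y) = k *: f x + f y) ->
  z \in span_img f X -> exists2 x, x \in X & z = f x.
Proof.
move=> f0 fL; move: z; apply: (span_ind (Q := fun z => exists2 x, x \in X & z = f x)).
- by exists 0; rewrite ?mem0v.
- move=> k x y [x' Hx' ->] [y' Hy' ->]; exists (k *: x' + y'); last by rewrite fL.
  by rewrite memvD // memvZ.
- move=> x /mapP [x' ]; rewrite mem_filter => /andP [Hx' _] ->; by exists x'.
Qed.

Lemma dual_mem n (X : {vspace 'rV[F]_n}) x y :
  x \in dual X -> y \in X -> dotv x y = 0.
Proof.
move=> H; move: x H y; apply: span_pred_ind.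
- by move=> y _; rewrite /dotv big1 // => i _; rewrite mxE mul0r.
- move=> k x z Hx Hz y Hy; rewrite /dotv.
  under eq_bigr => i _ do rewrite !mxE mulrDl -mulrA.
  rewrite big_split /= -mulr_sumr.
  by have := Hx y Hy; have := Hz y Hy; rewrite /dotv => -> ->; rewrite mulr0 addr0.
- by move=> x /forallP H y Hy; apply/eqP; have := H y; rewrite Hy.
Qed.

Lemma dual_memI n (X : {vspace 'rV[F]_n}) x :
  (forall y, y \in X -> dotv x y = 0) -> x \in dual X.
Proof.
move=> H; apply: span_pred_mem; apply/forallP => y; apply/implyP => Hy.
by rewrite H.
Qed.

Lemma star_mem n (X Y : {vspace 'rV[F]_n}) x y :
  x \in X -> y \in Y -> sprod x y \in star X Y.
Proof.
move=> Hx Hy; apply: memv_span; apply/allpairsP; exists (x, y) => /=.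
rewrite !map_id !mem_filter Hx Hy /=; by split => //; rewrite -enumT mem_enum.
Qed.


Lemma restr0 n (I : {set 'I_n}) : restr I (0 : 'rV[F]_n) = 0.
Proof. by apply/rowP => j; rewrite !mxE. Qed.
Lemma restrL n (I : {set 'I_n}) k (x y : 'rV[F]_n) :
  restr I (k *: x + y) = k *: restr I x + restr I y.
Proof. by apply/rowP => j; rewrite !mxE. Qed.
Lemma sprod0 n (u : 'rV[F]_n) : sprod u 0 = 0.
Proof. by apply/rowP => j; rewrite !mxE mulr0. Qed.
Lemma sprodL n (u : 'rV[F]_n) k x y :
  sprod u (k *: x + y) = k *: sprod u x + sprod u y.
Proof. by apply/rowP => j; rewrite !mxE; ring. Qed.
Lemma dotv_lin1 n (u w x z : 'rV[F]_n) k :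
  dotv (sprod (k *: x + z) u) w = k * dotv (sprod x u) w + dotv (sprod z u) w.
Proof.
rewrite /dotv mulr_sumr -big_split; apply: eq_bigr => i _; rewrite !mxE /=; ring.
Qed.
Lemma dotv0l n (w u : 'rV[F]_n) : dotv (sprod 0 u) w = 0.
Proof. by rewrite /dotv big1 // => i _; rewrite !mxE; ring. Qed.
Lemma dotv_sprodA n (a b c : 'rV[F]_n) : dotv (sprod a b) c = dotv a (sprod b c).
Proof. by apply: eq_bigr => i _; rewrite !mxE; ring. Qed.
Lemma dotv_swap n (a b c : 'rV[F]_n) : dotv (sprod a c) b = dotv (sprod a b) c.
Proof. by apply: eq_bigr => i _; rewrite !mxE; ring. Qed.
Lemma dotvC n (a b : 'rV[F]_n) : dotv a b = dotv b a.
Proof. by apply: eq_bigr => i _; rewrite mulrC. Qed.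
Lemma dotvDr n (a b c : 'rV[F]_n) : dotv a (b + c) = dotv a b + dotv a c.
Proof. by rewrite /dotv -big_split; apply: eq_bigr => i _; rewrite !mxE mulrDr. Qed.
Lemma sprodDr n (a b c : 'rV[F]_n) : sprod a (b + c) = sprod a b + sprod a c.
Proof. by apply/rowP => i; rewrite !mxE mulrDr. Qed.

Lemma dotv_restr n (I : {set 'I_n}) (a u : 'rV[F]_n) :
  (forall i, i \notin I -> u 0 i = 0) ->
  dotv a u = dotv (restr I a) (restr I u).
Proof.
move=> Hu; rewrite /dotv (bigID (mem I)) /= [X in _ + X]big1 ?addr0.
  rewrite big_enum_val; apply: eq_bigr => j _; by rewrite !mxE.
by move=> i /Hu ->; rewrite mulr0.
Qed.

Lemma restr_onto n (A : {vspace 'rV[F]_n}) (I : {set 'I_n}) :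
  (#|I| < mindist (dual A))%N -> forall z, exists2 a, a \in A & z = restr I a.
Proof.
move=> Hd z.
pose W := restrC I A.
suff HW : W = fullv.
  have : z \in W by rewrite HW memvf.
  by apply: span_img_ex; [exact: restr0 | exact: restrL].
apply/eqP; rewrite eqEdim subvf /= dimvf /dim /= mul1n leqNgt; apply/negP => Hlt.
pose d := \dim W. pose bs := vbasis W.
pose Bm : 'M[F]_(d, #|I|) := \matrix_(j < d, l < #|I|) (bs`_j) 0 l.
pose K := kermx Bm^T.
have rK : (0 < \rank K)%N.
  rewrite mxrank_ker subn_gt0; apply: leq_ltn_trans Hlt.
  exact: rank_leq_col.
have [i Hi] : exists i, row i K != 0.
  apply/existsP; apply: contraTT rK; rewrite negb_exists => /forallP H.
  have -> : K = 0 by apply/row_matrixP => i; have := H i; rewrite negbK row0 => /eqP.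
  by rewrite mxrank0.
set w := row i K in Hi.
have wB : w *m Bm^T = 0 by apply/sub_kermxP; exact: row_sub.
clearbody w.
have wbs : forall j : 'I_d, dotv w bs`_j = 0.
  move=> j; have := congr1 (fun M : 'M_(1, d) => M 0 j) wB; rewrite !mxE => <-.
  by apply: eq_bigr => l _; rewrite !mxE.
have wW : forall x, x \in W -> dotv w x = 0.
  move=> x; rewrite -(eqP (andP (vbasisP W)).1); move: x.
  apply: (span_ind (Q := fun x => dotv w x = 0)).
  - by rewrite /dotv big1 // => l _; rewrite (_ : (0 : 'rV[F]_#|I|) 0 l = 0) ?mulr0 // mxE.
  - move=> k x y Hx Hy; rewrite dotvDr Hy addr0 /dotv.
    have := Hx; rewrite /dotv => Hx'; rewrite (eq_bigr (fun l => k * (w 0 l * x 0 l))).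
      by rewrite -mulr_sumr Hx' mulr0.
    by move=> l _; rewrite !mxE /=; ring.
  - move=> x /(nthP 0) [j Hj <-].
    have Hj' : (j < d)%N by rewrite /d -(size_tuple bs).
    exact: (wbs (Ordinal Hj')).
pose x : 'rV[F]_n := \row_m \sum_(l < #|I|) (enum_val l == m)%:R * w 0 l.
have xout : forall m, m \notin I -> x 0 m = 0.
  move=> m Hm; rewrite mxE big1 // => l _.
  case: eqP => [E|]; last by rewrite mul0r.
  by move: Hm; rewrite -E enum_valP.
have rx : restr I x = w.
  apply/rowP => j; rewrite !mxE (bigD1 j) //= eqxx mul1r big1 ?addr0 //.
  move=> l Hl; case: eqP => [/enum_val_inj E|]; last by rewrite mul0r.
  by move: Hl; rewrite E eqxx.
have xA : x \in dual A.
  apply: dual_memI => a Ha; rewrite dotvC (dotv_restr a xout) rx dotvC.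
  by apply: wW; apply: span_img_mem.
have x0 : x != 0.
  by apply: contraNneq Hi => E; rewrite -rx E restr0.
have : (mindist (dual A) <= wt x)%N.
  rewrite /mindist -minEnat.
  exact: (@Order.TotalTheory.bigmin_le_cond _ nat _ n.+1 x (fun x => (x \in dual A) && (x != 0)) (@wt F n) (introT andP (conj xA x0))).
have : (wt x <= #|I|)%N.
  apply: subset_leq_card; apply/subsetP => m; rewrite inE; apply: contraR => Hm.
  by rewrite xout.
move=> h1 h2; have := leq_trans h2 h1; have := leq_ltn_trans (leq_trans h2 h1) Hd.
by rewrite ltnn.
Qed.

End Aux.

Theorem mainTheorem6 (F : finFieldType) (n t : nat)
  (C A B : {vspace 'rV[F]_n}) (c e : 'rV[F]_n) :
  locating_pair2 t C A B ->
  c \in C ->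
  wt e = t ->
  let y := c + e in
  let Ie := supp e in
  let e1 := e in
  let e2 := spow y 2 - spow c 2 in
  let V := dual (star (dual B) C) in
  let M1 := span_pred (fun a => (a \in A) &&
              [forall b : 'rV[F]_n, (b \in B) ==> (dotv (sprod a y) b == 0)]) in
  let M2 := span_pred (fun a => (a \in A) &&
              [forall v : 'rV[F]_n, (v \in V) ==> (dotv (sprod a (spow y 2)) v == 0)]) in
  let M := (M1 :&: M2)%VS in
  restrC Ie M = (dual (restrC Ie (smul e1 B)) :&: dual (restrC Ie (smul e2 V)))%VS.
Proof.
move=> [hAB _ hdA _ _] Hc Hw y I e1 e2 V M1 M2 M.
have hABC : forall a b c', a \in A -> b \in B -> c' \in C -> dotv (sprod a b) c' = 0.
  move=> a b c' Ha Hb Hc'; apply: dual_mem Hc'.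
  exact: (subvP hAB _ (star_mem Ha Hb)).
have eout : forall u i, i \notin I -> sprod e u 0 i = 0.
  by move=> u i; rewrite /I inE negbK mxE => /eqP ->; rewrite mul0r.
have e2out : forall u i, i \notin I -> sprod e2 u 0 i = 0.
  move=> u i; rewrite /I inE negbK mxE => /eqP E.
  by rewrite /e2 /y !mxE E addr0 subrr mul0r.
have K1 : forall a b, a \in A -> b \in B ->
    dotv (sprod a y) b = dotv (restr I a) (restr I (sprod e b)).
  move=> a b Ha Hb; rewrite /y sprodDr.
  have -> : dotv (sprod a c + sprod a e) b = dotv (sprod a c) b + dotv (sprod a e) b.
    by rewrite dotvC dotvDr !(dotvC b).
  rewrite dotv_swap hABC // add0r dotv_sprodA; apply: dotv_restr => i; first [exact: eout | exact: e2out].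
have K2 : forall a v, a \in A -> v \in V ->
    dotv (sprod a (spow y 2)) v = dotv (restr I a) (restr I (sprod e2 v)).
  move=> a v Ha Hv.
  have -> : spow y 2 = spow c 2 + e2 by rewrite /e2 addrC subrK.
  rewrite sprodDr.
  have -> : dotv (sprod a (spow c 2) + sprod a e2) v =
      dotv (sprod a (spow c 2)) v + dotv (sprod a e2) v.
    by rewrite dotvC dotvDr !(dotvC v).
  have -> : dotv (sprod a (spow c 2)) v = 0.
    have ac : sprod a c \in dual B.
      by apply: dual_memI => b Hb; rewrite dotv_swap hABC.
    have -> : sprod a (spow c 2) = sprod (sprod a c) c.
      by apply/rowP => i; rewrite !mxE expr2 mulrA.
    rewrite dotvC; apply: (dual_mem Hv); exact: star_mem.
  rewrite add0r dotv_sprodA; apply: dotv_restr => i; first [exact: eout | exact: e2out].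
have M1P : forall a, a \in M1 -> (a \in A) /\ forall b, b \in B -> dotv (sprod a y) b = 0.
  apply: (span_pred_ind (Q := fun a => (a \in A) /\ forall b, b \in B -> dotv (sprod a y) b = 0)).
  - by split; [exact: mem0v | move=> b _; rewrite dotv0l].
  - move=> k x z [Hx Hx'] [Hz Hz']; split; first by rewrite memvD // memvZ.
    by move=> b Hb; rewrite dotv_lin1 Hx' ?Hz' // mulr0 addr0.
  - move=> x /andP [Hx /forallP H]; split => // b Hb; apply/eqP.
    by have := H b; rewrite Hb.
have M2P : forall a, a \in M2 -> forall v, v \in V -> dotv (sprod a (spow y 2)) v = 0.
  apply: (span_pred_ind (Q := fun a => forall v, v \in V -> dotv (sprod a (spow y 2)) v = 0)).
  - by move=> v _; rewrite dotv0l.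
  - move=> k x z Hx Hz v Hv; by rewrite dotv_lin1 Hx ?Hz // mulr0 addr0.
  - move=> x /andP [Hx /forallP H] v Hv; apply/eqP.
    by have := H v; rewrite Hv.
apply/vspaceP => z; apply/idP/idP.
- move=> Hz; have [a Ha ->] := span_img_ex (@restr0 _ _ I) (@restrL _ _ I) Hz.
  move: Ha; rewrite memv_cap => /andP [Ha1 Ha2].
  have [HaA Hb] := M1P _ Ha1.
  rewrite memv_cap; apply/andP; split; apply: dual_memI => u Hu.
  + have [u' Hu' ->] := span_img_ex (@restr0 _ _ I) (@restrL _ _ I) Hu.
    have [b Hb' ->] := span_img_ex (@sprod0 _ _ e1) (@sprodL _ _ e1) Hu'.
    by rewrite -K1 // Hb.
  + have [u' Hu' ->] := span_img_ex (@restr0 _ _ I) (@restrL _ _ I) Hu.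
    have [v Hv ->] := span_img_ex (@sprod0 _ _ e2) (@sprodL _ _ e2) Hu'.
    by rewrite -K2 // M2P.
- rewrite memv_cap => /andP [Hz1 Hz2].
  have Hd : (#|I| < mindist (dual A))%N by rewrite /I -/(wt e) Hw.
  have [a Ha Ez] := restr_onto Hd z; rewrite Ez in Hz1 Hz2 *.
  apply: span_img_mem; rewrite memv_cap; apply/andP; split; apply: span_pred_mem;
    rewrite Ha /=; apply/forallP => u; apply/implyP => Hu.
  + rewrite K1 //; apply/eqP.
    exact: (dual_mem Hz1 (span_img_mem (restr I) (span_img_mem (sprod e1) Hu))).
  + rewrite K2 //; apply/eqP.
    exact: (dual_mem Hz2 (span_img_mem (restr I) (span_img_mem (sprod e2) Hu))).
Qed.
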